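(* In the setting described in the context, all initial stabilizers in the decoding subgraph of a reliable logical Pauli product are $+1$.
   Context: Setting: logical qubits encoded in distance-$d$ unrotated surface codes (CSS codes), each initialized in $|\overline{0}\rangle$ (all physical qubits in $|0\rangle$, so $Z$ stabilizers are $+1$ and $X$ stabilizers are uniformly random), $|\overline{+}\rangle$ (all physical qubits in $|+\rangle$, so $X$ stabilizers are $+1$ and $Z$ stabilizers random), or a magic state $|\overline{T}\rangle$ assumed to have all stabilizers $+1$; followed by transversal logical Clifford gates, each followed by one round of stabilizer measurement (SE), and logical $\overline{Z}$/$\overline{X}$ measurements by measuring all data qubits in $Z$/$X$. Each logical measurement product corresponds to a logical Pauli operator that can be back-propagated through the Clifford circuit. Reliable logical Pauli product: with $n$ logical qubits and $m$ measurements, identify a measurement product with $\vec v\in\mathbb{Z}_2^m$; let $M\in\mathbb{Z}_2^{2n\times m}$ have entry $(i,j)$ (resp. $(n+i,j)$) equal to $1$ iff the back-propagation of measurement $j$ to initialization has an $\overline X$- (resp. $\overline Z$-) component on qubit $i$; let $B$ contain the unit vectors $\vec e_{x,i}$ (position $i$) and $\vec e_{z,i}$ (position $n+i$) if qubit $i$ starts in $|\overline T\rangle$, only $\vec e_{z,i}$ if it starts in $|\overline0\rangle$, only $\vec e_{x,i}$ if it starts in $|\overline+\rangle$. The product is reliable if $M\vec v\in\operatorname{span}B$. Decoding subgraph of a logical Pauli product $\overline P$: back-propagate $\overline P$ through the circuit, giving at each time step $t$ an operator $\overline P^t=\overline O_1^t\otimes\cdots\otimes\overline O_n^t$ with $\overline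 O_j^t\in\{\overline I,\overline X,\overline Y,\overline Z\}$. Include the $X$-stabilizer checks of qubit $j$ at step $t$ if $\overline O_j^t\in\{\overline X,\overline Y\}$ and the $Z$-stabilizer checks if $\overline O_j^t\in\{\overline Z,\overline Y\}$, where a check is the product of a stabilizer measurement outcome with the measured value(s) of its back-propagation through the preceding gate at the previous SE round (at the first round, a deterministically-$+1$ initial stabilizer forms a check by itself). The initial stabilizers of the subgraph are those stabilizers, at initialization, of the qubits and bases included in the subgraph. *)

(* Defs.v *)
From HB Require Import structures.
From mathcomp Require Import all_boot all_order all_algebra.
Set Implicit Arguments. Unset Strict Implicit. Unset Printing Implicit Defensive.
Import GRing.Theory.
Local Open Scope ring_scope.

Inductive init_state := Init0 | InitPlus | InitT.

Inductive pbasis := BX | BZ.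

(* A logical Pauli operator on n qubits up to phase: a row vector in F_2^{2n};
   position i (= lshift n i) is the X-component of qubit i,
   position n+i (= rshift n i) is the Z-component of qubit i. *)
Definition pauli n := 'rV['F_2]_(n + n).

Definition xcomp n (p : pauli n) (i : 'I_n) : 'F_2 := p 0 (lshift n i).
Definition zcomp n (p : pauli n) (i : 'I_n) : 'F_2 := p 0 (rshift n i).

Definition e_x n (i : 'I_n) : pauli n := delta_mx 0 (lshift n i).
Definition e_z n (i : 'I_n) : pauli n := delta_mx 0 (rshift n i).
Definition pauli_unit n (i : 'I_n) (b : pbasis) : pauli n :=
  if b is BX then e_x i else e_z i.

Definition symp_form n : 'M['F_2]_(n + n) := block_mx 0 1%:M 1%:M 0.
Definition symplectic n (G : 'M['F_2]_(n + n)) : bool :=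
  G *m symp_form n *m G^T == symp_form n.

(* A logical Clifford gate is represented by its Heisenberg back-propagation
   action on Pauli vectors: a Pauli p right after the gate back-propagates to
   p *m G right before it.  [gates] = [G_1; ...; G_T] in time order. *)
Definition backprop n (gates : seq 'M['F_2]_(n + n)) (t : nat) (p : pauli n)
  : pauli n :=
  foldl (fun q G => q *m G) p (rev (take t gates)).

(* A logical measurement: performed after the first [mtime] gates, on qubit
   [mqubit], in basis [mbasis] (Z-bar or X-bar). *)
Record meas n := Meas { mtime : nat; mqubit : 'I_n; mbasis : pbasis }.

Definition meas_backprop n (gates : seq 'M['F_2]_(n + n)) (ms : meas n)
  : pauli n :=
  backprop gates (mtime ms) (pauli_unit (mqubit ms) (mbasis ms)).

(* The matrix M in Z_2^{2n x m}: column j is the back-propagation of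
   measurement j (X-components in rows i, Z-components in rows n+i). *)
Definition meas_matrix n m (gates : seq 'M['F_2]_(n + n))
  (ms : 'I_m -> meas n) : 'M['F_2]_(n + n, m) :=
  \matrix_(k, j) (meas_backprop gates (ms j)) 0 k.

Definition init_units n (s : init_state) (i : 'I_n) : seq (pauli n) :=
  match s with
  | InitT => [:: e_x i; e_z i]
  | Init0 => [:: e_z i]
  | InitPlus => [:: e_x i]
  end.
Definition Bset n (init : 'I_n -> init_state) : seq (pauli n) :=
  flatten [seq init_units (init i) i | i <- enum 'I_n].

Definition reliable n m (init : 'I_n -> init_state)
  (gates : seq 'M['F_2]_(n + n)) (ms : 'I_m -> meas n) (v : 'cV['F_2]_m)
  : Prop :=
  ((meas_matrix gates ms *m v)^T \in <<Bset init>>%VS).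

(* The logical Pauli product P of the selected measurements, back-propagated
   to initialization (time step 0): P^0. *)
Definition product_backprop n m (gates : seq 'M['F_2]_(n + n))
  (ms : 'I_m -> meas n) (v : 'cV['F_2]_m) : pauli n :=
  \sum_(j < m | v j 0 == 1) meas_backprop gates (ms j).

(* Initial stabilizers of the decoding subgraph of P: the X-stabilizers of
   qubit j are included iff O_j^0 in {X,Y} (X-component 1), the
   Z-stabilizers iff O_j^0 in {Z,Y} (Z-component 1). *)
Definition in_init_subgraph n (P0 : pauli n) (j : 'I_n) (b : pbasis) : bool :=
  match b with
  | BX => xcomp P0 j == 1
  | BZ => zcomp P0 j == 1
  end.

Definition init_stab_plus1 (s : init_state) (b : pbasis) : bool :=
  match s, b with
  | InitT, _ => true
  | Init0, BZ => true
  | InitPlus, BX => true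
  | _, _ => false
  end.

(* Main.v *)
Require Import Defs.
From mathcomp Require Import all_boot all_order all_algebra.
Local Open Scope ring_scope.
Import GRing.Theory.

Lemma span0 n (S : seq (pauli n)) k (x : pauli n) :
  (forall p, p \in S -> p 0 k = 0) -> x \in <<S>>%VS -> x 0 k = 0.
Proof.
move=> H Hx; rewrite (@coord_span _ _ _ (in_tuple S) x Hx) summxE big1 // => i _.
by rewrite mxE H ?mulr0 // mem_nth.
Qed.

Lemma F2_cases (x : 'F_2) : x = 0 \/ x = 1.
Proof.
case: x => [[|[|y]]] Hy; [left|right|by []]; exact/val_inj.
Qed.

Lemma prod_eq n m (gates : seq 'M['F_2]_(n + n)) (ms : 'I_m -> meas n)
  (v : 'cV['F_2]_m) :
  (meas_matrix gates ms *m v)^T = product_backprop gates ms v.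
Proof.
apply/matrixP => i k; rewrite !mxE /product_backprop summxE big_mkcond /=.
rewrite (ord1 i) [RHS]big_mkcond; apply: eq_bigr => j _; rewrite mxE.
by case: (F2_cases (v j 0)) => ->; rewrite ?mulr0 ?mulr1.
Qed.

Lemma coord_xl n (i j : 'I_n) : (e_x i : pauli n) 0 (lshift n j) = (i == j)%:R.
Proof. rewrite /e_x mxE eqxx /= (inj_eq (@lshift_inj _ _)). by rewrite eq_sym. Qed.
Lemma coord_zr n (i j : 'I_n) : (e_z i : pauli n) 0 (rshift n j) = (i == j)%:R.
Proof. by rewrite /e_z mxE eqxx /= (inj_eq (@rshift_inj _ _)) eq_sym. Qed.
Lemma coord_zl n (i j : 'I_n) : (e_z i : pauli n) 0 (lshift n j) = 0.
Proof. by rewrite /e_z mxE eqxx /= eq_sym eq_rlshift. Qed.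
Lemma coord_xr n (i j : 'I_n) : (e_x i : pauli n) 0 (rshift n j) = 0.
Proof. by rewrite /e_x mxE eqxx /= eq_sym eq_lrshift. Qed.

Lemma units_in n s (i : 'I_n) p : p \in init_units s i -> p = e_x i \/ p = e_z i.
Proof.
case: s; rewrite /= !inE; [move/eqP|move/eqP|case/orP => /eqP] => ->; auto.
Qed.

Theorem lemma2 (n m : nat) (init : 'I_n -> init_state)
  (gates : seq 'M['F_2]_(n + n)) (hsymp : all (@symplectic n) gates)
  (ms : 'I_m -> meas n) (v : 'cV['F_2]_m) :
  reliable init gates ms v ->
  forall (j : 'I_n) (b : pbasis),
    in_init_subgraph (product_backprop gates ms v) j b ->
    init_stab_plus1 (init j) b.
Proof.
rewrite /reliable prod_eq => Hrel j b Hin.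
apply/negPn/negP => Hn.
case: b Hin Hn => /= /eqP Hin Hn.
- have H0 : product_backprop gates ms v 0 (lshift n j) = 0.
    apply: (span0 _ _ _ _ _ Hrel) => p /flattenP [s /mapP [i _ ->] ps].
    have [eij|nij] := eqVneq j i; first subst i.
      by move: ps Hn; case: (init j) => /= ps // _; rewrite inE in ps;
        move/eqP: ps => ->; rewrite coord_zl.
    by case/units_in: ps => ->; rewrite ?coord_zl // coord_xl eq_sym (negbTE nij).
  by move: Hin; rewrite /xcomp H0.
- have H0 : product_backprop gates ms v 0 (rshift n j) = 0.
    apply: (span0 _ _ _ _ _ Hrel) => p /flattenP [s /mapP [i _ ->] ps].
    have [eij|nij] := eqVneq j i; first subst i.
      by move: ps Hn; case: (init j) => /= ps // _; rewrite inE in ps;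
        move/eqP: ps => ->; rewrite coord_xr.
    by case/units_in: ps => ->; rewrite ?coord_xr // coord_zr eq_sym (negbTE nij).
  by move: Hin; rewrite /zcomp H0.
Qed.
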